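(* For every integer $n\ge0$, \[ \sum_{k=0}^{n}\sum_{p=0}^{n-k}\frac{\ln^p2}{p!}\operatorname{Li}_{n-k+2-p,\{1\}_k}\!\left(\tfrac12\right)=\frac{1-2^{n+1}}{(n+2)!}\ln^{n+2}2+\frac12\sum_{k=0}^{n}\zeta(n-k+2,\{1\}_k). \]
   Context: Multiple zeta values: $\zeta(s_1,\dots,s_l):=\sum_{n_1>\cdots>n_l>0}n_1^{-s_1}\cdots n_l^{-s_l}$ ($s_1\ge2$). Multiple polylogarithm: $\operatorname{Li}_{s_1,\dots,s_l}(z):=\sum_{n_1>n_2>\cdots>n_l>0}\frac{z^{n_1}}{n_1^{s_1}\cdots n_l^{s_l}}$. The notation $\{1\}_k$ denotes the string $1,1,\dots,1$ ($k$ times); for $k=0$ it is empty. *)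

(* Defs.v *)
From Stdlib Require Import Reals Lra Lia List ClassicalEpsilon.
Open Scope R_scope.

(* The limit of a real sequence (chosen by epsilon; equals the true limit
   whenever the sequence converges, since limits are unique). *)
Definition seq_lim (u : nat -> R) : R :=
  epsilon (inhabits 0%R) (fun l => Un_cv u l).

(* Truncated nested sum:
   H s M = sum_{M >= n_1 > n_2 > ... > n_l > 0} n_1^{-s_1} ... n_l^{-s_l}. *)
Fixpoint H (s : list nat) (M : nat) : R :=
  match s with
  | nil => 1
  | s1 :: r =>
      (fix loop (m : nat) : R :=
         match m with
         | O => 0
         | S m' => loop m' + / (INR (S m') ^ s1) * H r m'
         end) M
  end.

(* Truncated multiple polylogarithm:
   sum_{N >= n_1 > ... > n_l > 0} z^{n_1} / (n_1^{s_1} ... n_l^{s_l}). *)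
Definition Li_trunc (s : list nat) (z : R) (N : nat) : R :=
  match s with
  | nil => 1
  | s1 :: r =>
      (fix loop (m : nat) : R :=
         match m with
         | O => 0
         | S m' => loop m' + z ^ (S m') / (INR (S m') ^ s1) * H r m'
         end) N
  end.

Definition Li (s : list nat) (z : R) : R := seq_lim (Li_trunc s z).

Definition zeta (s : list nat) : R := seq_lim (H s).

Definition ones (k : nat) : list nat := repeat 1%nat k.

(* Main.v *)
Require Import Defs.
From Stdlib Require Import Reals List Arith Factorial.
From Stdlib Require Import Lra Lia ClassicalEpsilon.
Open Scope R_scope.


Lemma seq_lim_ok u l : Un_cv u l -> seq_lim u = l.
Proof.
  intros Hu. unfold seq_lim.
  assert (Hs := epsilon_spec (inhabits 0) (fun l => Un_cv u l) (ex_intro _ l Hu)).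
  eapply UL_sequence; eauto.
Qed.

Lemma Li_trunc_S m r z M :
  Li_trunc (m :: r) z (S M) = sum_f_R0 (fun N => z ^ (S N) / INR (S N) ^ m * H r N) M.
Proof.
  induction M.
  - simpl. ring.
  - rewrite tech5. rewrite <- IHM. reflexivity.
Qed.

Lemma H_S m r M :
  H (m :: r) (S M) = sum_f_R0 (fun N => / INR (S N) ^ m * H r N) M.
Proof.
  induction M.
  - simpl. ring.
  - rewrite tech5. rewrite <- IHM. reflexivity.
Qed.

Lemma H_rec m r M : H (m :: r) (S M) = H (m :: r) M + / INR (S M) ^ m * H r M.
Proof. reflexivity. Qed.

Lemma INR_S_pos N : 0 < INR (S N).
Proof. apply lt_0_INR; lia. Qed.

Lemma H_ones_nonneg k N : 0 <= H (ones k) N.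
Proof.
  revert N; induction k; intros N.
  - simpl; lra.
  - induction N.
    + simpl; assert (0 < 2 ^ k) by (apply pow_lt; lra); lra.
    + change (ones (S k)) with (1%nat :: ones k). rewrite H_rec.
      assert (0 < / INR (S N) ^ 1) by (apply Rinv_0_lt_compat; apply pow_lt; apply INR_S_pos).
      specialize (IHk N). change (ones (S k)) with (1%nat :: ones k) in IHN. nra.
Qed.

Lemma H_ones_lin k N : H (ones k) N <= 2 ^ k * INR (S N).
Proof.
  revert N; induction k; intros N.
  - change (H (ones 0) N) with 1. rewrite pow_O.
    assert (1 <= INR (S N)) by (apply (le_INR 1); lia). lra.
  - induction N.
    + simpl; assert (0 < 2 ^ k) by (apply pow_lt; lra); lra.
    + change (ones (S k)) with (1%nat :: ones k) in *. rewrite H_rec.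
      specialize (IHk N).
      assert (Hp := INR_S_pos N).
      assert (/ INR (S N) ^ 1 * H (ones k) N <= 2 ^ k).
      { rewrite pow_1. apply (Rmult_le_reg_l (INR (S N))); [lra|].
        rewrite <- Rmult_assoc, Rinv_r by lra. nra. }
      rewrite S_INR with (n := S N). simpl (2 ^ S k) in *. 
      assert (0 < 2 ^ k) by (apply pow_lt; lra). nra.
Qed.

Fixpoint Pp (M : nat) : R :=
  match M with O => 1 | S M' => Pp M' * (1 + / (2 * INR (S M'))) end.

Lemma Pp_ge1 M : 1 <= Pp M.
Proof.
  induction M; [simpl; lra|].
  change (Pp (S M)) with (Pp M * (1 + / (2 * INR (S M)))).
  assert (0 < / (2 * INR (S M))) by (apply Rinv_0_lt_compat; assert (H0:=INR_S_pos M); lra).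
  nra.
Qed.

Lemma H_ones_Pp k N : H (ones k) N <= 2 ^ k * Pp N.
Proof.
  revert N; induction k; intros N.
  - change (H (ones 0) N) with 1. rewrite pow_O. assert (H0 := Pp_ge1 N). lra.
  - induction N.
    + simpl; assert (0 < 2 ^ k) by (apply pow_lt; lra); lra.
    + change (ones (S k)) with (1%nat :: ones k) in *. rewrite H_rec.
      specialize (IHk N).
      assert (Hp := INR_S_pos N).
      change (Pp (S N)) with (Pp N * (1 + / (2 * INR (S N)))). simpl (2 ^ S k) in *.
      rewrite pow_1.
      assert (E : 2 * 2 ^ k * (Pp N * (1 + / (2 * INR (S N)))) =
                  2 * 2 ^ k * Pp N + / INR (S N) * (2 ^ k * Pp N)) by (field; lra).
      rewrite E.
      assert (0 < / INR (S N)) by (apply Rinv_0_lt_compat; lra).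
      apply Rplus_le_compat; [exact IHN|].
      apply Rmult_le_compat_l; lra.
Qed.

Lemma pos_series_cv (a : nat -> R) B :
  (forall n, 0 <= a n) -> (forall n, sum_f_R0 a n <= B) ->
  exists l, Un_cv (sum_f_R0 a) l.
Proof.
  intros Ha HB.
  destruct (growing_cv (sum_f_R0 a)) as [l Hl].
  - intro n. rewrite tech5. specialize (Ha (S n)). lra.
  - exists B. intros x [i ->]. apply HB.
  - exists l; exact Hl.
Qed.

Lemma abs_series_cv (a b : nat -> R) :
  (forall n, Rabs (a n) <= b n) -> (exists l, Un_cv (sum_f_R0 b) l) ->
  exists l, Un_cv (sum_f_R0 a) l.
Proof.
  intros Hab Hb.
  apply constructive_indefinite_description in Hb.
  assert (Habs := Rseries_CV_comp (fun n => Rabs (a n)) b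
     (fun n => conj (Rabs_pos _) (Hab n)) Hb).
  apply cv_cauchy_1 in Habs. apply cauchy_abs in Habs.
  destruct (cv_cauchy_2 _ Habs) as [l Hl]. exists l; exact Hl.
Qed.

Lemma geom_lin_sum r n : 0 <= r < 1 ->
  sum_f_R0 (fun N => INR (S N) * r ^ N) n =
  (1 - INR (S (S n)) * r ^ (S n) + INR (S n) * r ^ (S (S n))) / (1 - r) ^ 2.
Proof.
  intros Hr. induction n.
  - simpl. field. lra.
  - rewrite tech5, IHn. rewrite !S_INR. simpl pow. field. lra.
Qed.

Lemma geom_lin_bound r n : 0 <= r < 1 ->
  sum_f_R0 (fun N => INR (S N) * r ^ N) n <= / (1 - r) ^ 2.
Proof.
  intros Hr. rewrite geom_lin_sum by lra.
  unfold Rdiv. rewrite Rmult_comm. rewrite <- (Rmult_1_r (/ (1 - r) ^ 2)) at 2.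
  apply Rmult_le_compat_l.
  - apply Rlt_le, Rinv_0_lt_compat, pow_lt; lra.
  - assert (0 <= r ^ S n) by (apply pow_le; lra).
    assert (INR (S n) * r ^ S (S n) <= INR (S (S n)) * r ^ S n).
    { change (r ^ S (S n)) with (r * r ^ S n). rewrite (S_INR (S n)).
      assert (0 <= INR (S n)) by apply pos_INR.
      assert (r * r ^ S n <= r ^ S n) by nra.
      assert (INR (S n) * (r * r ^ S n) <= INR (S n) * r ^ S n) by (apply Rmult_le_compat_l; lra).
      nra. }
    lra.
Qed.

Lemma geom_lin_cv r : 0 <= r < 1 ->
  exists l, Un_cv (sum_f_R0 (fun N => INR (S N) * r ^ N)) l.
Proof.
  intros Hr. apply pos_series_cv with (B := / (1 - r) ^ 2).
  - intro n. apply Rmult_le_pos; [apply pos_INR | apply pow_le; lra].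
  - intro n. apply geom_lin_bound; lra.
Qed.

Definition ps0 (a : nat -> R) (y : R) (n : nat) := sum_f_R0 (fun N => y ^ N * a N) n.
Definition ps1 (b : nat -> R) (y : R) (n : nat) := sum_f_R0 (fun N => y ^ (S N) * b N) n.

Lemma ps0_cv a K y : (forall N, Rabs (a N) <= K * INR (S N)) -> Rabs y < 1 ->
  exists l, Un_cv (ps0 a y) l.
Proof.
  intros Ha Hy. unfold ps0.
  apply abs_series_cv with (b := fun N => K * (INR (S N) * Rabs y ^ N)).
  - intro N. rewrite Rabs_mult, <- RPow_abs.
    assert (0 <= Rabs y ^ N) by (apply pow_le, Rabs_pos).
    specialize (Ha N).
    replace (K * (INR (S N) * Rabs y ^ N)) with (Rabs y ^ N * (K * INR (S N))) by ring.
    apply Rmult_le_compat_l; auto.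
  - destruct (geom_lin_cv (Rabs y)) as [l Hl]. split; [apply Rabs_pos|lra].
    exists (K * l). 
    apply Un_cv_ext with (un := fun n => K * sum_f_R0 (fun N => INR (S N) * Rabs y ^ N) n).
    + intro n. rewrite scal_sum. apply sum_eq. intros; ring.
    + apply CV_mult; [intros e He; exists 0%nat; intros; unfold Rdist; rewrite Rminus_diag, Rabs_R0; lra|exact Hl].
Qed.

Lemma ps_CVU a K (r : posreal) (g : R -> R) :
  r < 1 ->
  (forall N, Rabs (a N) <= K * INR (S N)) ->
  (forall y, Rabs y < r -> Un_cv (ps0 a y) (g y)) ->
  CVU (fun n y => ps0 a y n) g 0 r.
Proof.
  intros Hr1 Ha Hg eps Heps.
  assert (Hr0 : 0 < r) by apply cond_pos.
  destruct (geom_lin_cv r) as [l Hl]; [lra|].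
  set (An := fun N => K * (INR (S N) * r ^ N)).
  assert (HA : Un_cv (sum_f_R0 An) (K * l)).
  { apply Un_cv_ext with (un := fun n => K * sum_f_R0 (fun N => INR (S N) * r ^ N) n).
    + intro n. rewrite scal_sum. apply sum_eq. intros; unfold An; ring.
    + apply CV_mult; [intros e He; exists 0%nat; intros; unfold Rdist; rewrite Rminus_diag, Rabs_R0; lra|exact Hl]. }
  destruct (HA eps Heps) as [N0 HN0].
  exists N0. intros n y Hn Hy.
  unfold Boule in Hy. rewrite Rminus_0_r in Hy.
  apply Rle_lt_trans with (K * l - sum_f_R0 An n).
  - apply (sum_maj1 (fun N y => y ^ N * a N) An y (g y) (K * l) n).
    + apply Hg; exact Hy.
    + exact HA.
    + intro N. unfold An. rewrite Rabs_mult, <- RPow_abs.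
      assert (0 <= Rabs y ^ N) by (apply pow_le, Rabs_pos).
      assert (Rabs y ^ N <= r ^ N) by (apply pow_incr; split; [apply Rabs_pos|lra]).
      specialize (Ha N).
      assert (0 <= K * INR (S N)) by (eapply Rle_trans; [apply Rabs_pos|exact Ha]).
      apply Rle_trans with (Rabs y ^ N * (K * INR (S N))); [apply Rmult_le_compat_l; auto|].
      apply Rle_trans with (r ^ N * (K * INR (S N))); [apply Rmult_le_compat_r; auto|].
      right; ring.
  - specialize (HN0 n Hn). unfold Rdist in HN0.
    rewrite Rabs_minus_sym in HN0. 
    apply Rle_lt_trans with (2 := HN0). apply RRle_abs.
Qed.

Lemma deriv_sum (f : nat -> R -> R) (f' : nat -> R) n x :
  (forall i, (i <= n)%nat -> derivable_pt_lim (f i) x (f' i)) ->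
  derivable_pt_lim (fun y => sum_f_R0 (fun i => f i y) n) x (sum_f_R0 f' n).
Proof.
  induction n; intros Hd.
  - simpl. apply Hd. lia.
  - simpl. apply (derivable_pt_lim_plus (fun y => sum_f_R0 (fun i => f i y) n) (f (S n))).
    + apply IHn. intros; apply Hd; lia.
    + apply Hd; lia.
Qed.

Lemma ps_deriv (a b : nat -> R) K (g G : R -> R) y :
  (forall N, Rabs (a N) <= K * INR (S N)) ->
  (forall N, INR (S N) * b N = a N) ->
  (forall x, Rabs x < 1 -> Un_cv (ps1 b x) (g x)) ->
  (forall x, Rabs x < 1 -> Un_cv (ps0 a x) (G x)) ->
  Rabs y < 1 -> derivable_pt_lim g y (G y).
Proof.
  intros Ha Hab Hg HG Hy.
  assert (Hr : 0 < (1 + Rabs y) / 2) by (assert (0 <= Rabs y) by apply Rabs_pos; lra).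
  set (r := mkposreal _ Hr).
  assert (Hr1 : r < 1) by (simpl; lra).
  apply (CVU_derivable (fun n x => ps1 b x n) (fun n x => ps0 a x n) g G 0 r).
  - apply ps_CVU with K; auto. intros; apply HG; lra.
  - intros x Hx. unfold Boule in Hx; rewrite Rminus_0_r in Hx. apply Hg. simpl in Hx; lra.
  - intros n x _. unfold ps1, ps0.
    apply deriv_sum. intros i _.
    rewrite <- Hab.
    replace (x ^ i * (INR (S i) * b i)) with ((INR (S i) * x ^ pred (S i)) * b i) by (simpl; ring).
    apply (derivable_pt_lim_scal_right (fun y => y ^ S i)).
    apply derivable_pt_lim_pow.
  - unfold Boule; rewrite Rminus_0_r; simpl; lra.
Qed.

Definition cc m k N := / INR (S N) ^ m * H (ones k) N.

Lemma cc_bound m k N : Rabs (cc m k N) <= 2 ^ k * INR (S N).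
Proof.
  unfold cc. rewrite Rabs_mult.
  rewrite (Rabs_right (H _ _)) by (apply Rle_ge, H_ones_nonneg).
  assert (Hp := INR_S_pos N).
  assert (1 <= INR (S N) ^ m) by (apply pow_R1_Rle; apply (le_INR 1); lia).
  rewrite Rabs_right by (apply Rle_ge, Rlt_le, Rinv_0_lt_compat; lra).
  assert (/ INR (S N) ^ m <= 1) by (rewrite <- Rinv_1; apply Rinv_le_contravar; lra).
  assert (0 < / INR (S N) ^ m) by (apply Rinv_0_lt_compat; lra).
  assert (Hb := H_ones_lin k N). assert (Hn := H_ones_nonneg k N). nra.
Qed.

Lemma series_terms_0 (a : nat -> R) l : Un_cv (sum_f_R0 a) l -> Un_cv a 0.
Proof.
  intros Hl.
  apply CV_shift with (k := 1%nat).
  apply Un_cv_ext with (un := fun n => sum_f_R0 a (S n) - sum_f_R0 a n).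
  - intro n. rewrite tech5. replace (n + 1)%nat with (S n) by lia. ring.
  - replace 0 with (l - l) by ring. apply CV_minus; [|exact Hl].
    apply CV_shift' with (k := 1%nat) in Hl.
    apply Un_cv_ext with (2 := Hl). intro n. f_equal. lia.
Qed.

Lemma ps1_eq b y n : ps1 b y n = y * ps0 b y n.
Proof. unfold ps1, ps0. rewrite scal_sum. apply sum_eq. intros; simpl; ring. Qed.

Lemma Li_trunc_ps1 m k x n : Li_trunc (m :: ones k) x (S n) = ps1 (cc m k) x n.
Proof. rewrite Li_trunc_S. unfold ps1, cc. apply sum_eq. intros. unfold Rdiv. ring. Qed.

Lemma Li_cv m k x : Rabs x < 1 -> Un_cv (Li_trunc (m :: ones k) x) (Li (m :: ones k) x).
Proof.
  intros Hx.
  destruct (ps0_cv (cc m k) (2 ^ k) x (cc_bound m k) Hx) as [l Hl].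
  assert (H1 : Un_cv (Li_trunc (m :: ones k) x) (x * l)).
  { apply CV_shift with (k := 1%nat).
    apply Un_cv_ext with (un := fun n => x * ps0 (cc m k) x n).
    - intro n. replace (n + 1)%nat with (S n) by lia. rewrite Li_trunc_ps1, ps1_eq. reflexivity.
    - apply CV_mult; [intros e He; exists 0%nat; intros; unfold Rdist; rewrite Rminus_diag, Rabs_R0; lra|exact Hl]. }
  unfold Li. rewrite (seq_lim_ok _ _ H1). exact H1.
Qed.

Lemma Li_ps1_cv m k x : Rabs x < 1 -> Un_cv (ps1 (cc m k) x) (Li (m :: ones k) x).
Proof.
  intros Hx. assert (H1 := CV_shift' _ 1%nat _ (Li_cv m k x Hx)).
  apply Un_cv_ext with (2 := H1). intro n. replace (n + 1)%nat with (S n) by lia.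
  apply Li_trunc_ps1.
Qed.

Definition E m k y := seq_lim (ps0 (cc m k) y).

Lemma E_cv m k y : Rabs y < 1 -> Un_cv (ps0 (cc m k) y) (E m k y).
Proof.
  intros Hy. destruct (ps0_cv (cc m k) (2 ^ k) y (cc_bound m k) Hy) as [l Hl].
  unfold E. rewrite (seq_lim_ok _ _ Hl). exact Hl.
Qed.

Lemma Li_deriv m k y : Rabs y < 1 ->
  derivable_pt_lim (Li (S m :: ones k)) y (E m k y).
Proof.
  intros Hy.
  apply (ps_deriv (cc m k) (cc (S m) k) (2 ^ k)).
  - apply cc_bound.
  - intro N. unfold cc. change (INR (S N) ^ S m) with (INR (S N) * INR (S N) ^ m). assert (Hp := INR_S_pos N).
    assert (0 < INR (S N) ^ m) by (apply pow_lt; lra). field. lra.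
  - intros; apply Li_ps1_cv; auto.
  - intros; apply E_cv; auto.
  - exact Hy.
Qed.

Lemma E_mul m k y : Rabs y < 1 -> y * E m k y = Li (m :: ones k) y.
Proof.
  intros Hy. apply (UL_sequence (ps1 (cc m k) y)).
  - apply Un_cv_ext with (un := fun n => y * ps0 (cc m k) y n).
    + intro n. rewrite ps1_eq; reflexivity.
    + apply CV_mult; [intros e He; exists 0%nat; intros; unfold Rdist; rewrite Rminus_diag, Rabs_R0; lra|apply E_cv; auto].
  - apply Li_ps1_cv; auto.
Qed.

Lemma telesc_geom (e d : nat -> R) y n :
  (forall N, e (S N) = e N + d N) ->
  (1 - y) * sum_f_R0 (fun N => y ^ N * e N) (S n) =
  e 0%nat + sum_f_R0 (fun N => y ^ (S N) * d N) n - y ^ (S (S n)) * e (S n).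
Proof.
  intros Hed. induction n.
  - simpl. rewrite (Hed 0%nat). ring.
  - rewrite tech5. rewrite Rmult_plus_distr_l, IHn. rewrite tech5.
    rewrite (Hed (S n)). simpl. ring.
Qed.

Lemma const_cv (c : R) : Un_cv (fun _ => c) c.
Proof. intros e He; exists 0%nat; intros; unfold Rdist; rewrite Rminus_diag, Rabs_R0; lra. Qed.

Lemma E_tele_S k y : Rabs y < 1 -> (1 - y) * E 0 (S k) y = Li (1%nat :: ones k) y.
Proof.
  intros Hy.
  set (e := cc 0 (S k)). set (d := cc 1 k).
  assert (Hed : forall N, e (S N) = e N + d N).
  { intro N. unfold e, d, cc. rewrite !pow_O, Rinv_1, !Rmult_1_l.
    change (ones (S k)) with (1%nat :: ones k). rewrite H_rec. reflexivity. }
  assert (He0 : e 0%nat = 0) by (unfold e, cc; simpl; ring).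
  apply (UL_sequence (fun n => (1 - y) * ps0 e y (S n))).
  - assert (H1 := CV_shift' (fun n => (1 - y) * ps0 e y n) 1%nat _ (CV_mult _ _ _ _ (const_cv (1 - y)) (E_cv 0 (S k) y Hy))).
    apply Un_cv_ext with (2 := H1). intro n. replace (n + 1)%nat with (S n) by lia. reflexivity.
  - apply Un_cv_ext with (un := fun n => ps1 d y n - y * (y ^ (S n) * e (S n))).
    + intro n. unfold ps0. rewrite telesc_geom with (d := d) by exact Hed. rewrite He0.
      unfold ps1. simpl pow. ring.
    + replace (Li (1%nat :: ones k) y) with (Li (1%nat :: ones k) y - y * 0) by ring.
      apply CV_minus; [apply Li_ps1_cv; auto|].
      apply CV_mult; [apply const_cv|].
      assert (Ht := series_terms_0 _ _ (E_cv 0 (S k) y Hy)).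
      apply CV_shift' with (k := 1%nat) in Ht.
      apply Un_cv_ext with (2 := Ht). intro n. replace (n + 1)%nat with (S n) by lia. reflexivity.
Qed.

Lemma E_tele_0 y : Rabs y < 1 -> (1 - y) * E 0 0 y = 1.
Proof.
  intros Hy.
  set (e := cc 0 0).
  assert (Hed : forall N, e (S N) = e N + 0).
  { intro N. unfold e, cc. simpl. ring. }
  assert (He0 : forall N, e N = 1) by (intro N; unfold e, cc; simpl; field).
  apply (UL_sequence (fun n => (1 - y) * ps0 e y (S n))).
  - assert (H1 := CV_shift' (fun n => (1 - y) * ps0 e y n) 1%nat _ (CV_mult _ _ _ _ (const_cv (1 - y)) (E_cv 0 0 y Hy))).
    apply Un_cv_ext with (2 := H1). intro n. replace (n + 1)%nat with (S n) by lia. reflexivity.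
  - apply Un_cv_ext with (un := fun n => 1 - y * (y ^ (S n) * e (S n))).
    + intro n. unfold ps0. rewrite telesc_geom with (d := fun _ => 0) by exact Hed.
      rewrite sum_eq_R0 by (intros; ring). rewrite !He0. simpl pow. ring.
    + assert (Hlim : Un_cv (fun n => 1 - y * (y ^ S n * e (S n))) (1 - y * 0)).
      { apply CV_minus; [apply const_cv|].
        apply CV_mult; [apply const_cv|].
        assert (Ht := series_terms_0 _ _ (E_cv 0 0 y Hy)).
        apply CV_shift' with (k := 1%nat) in Ht.
        apply Un_cv_ext with (2 := Ht). intro n. replace (n + 1)%nat with (S n) by lia. reflexivity. }
      rewrite Rmult_0_r, Rminus_0_r in Hlim. exact Hlim.
Qed.

Definition P (j : nat) (z : R) := (- ln z) ^ j / INR (fact j).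
Definition Q (j : nat) (z : R) := P j (1 - z).

Lemma P_deriv q z : 0 < z -> derivable_pt_lim (P (S q)) z (- P q z / z).
Proof.
  intros Hz. unfold P.
  assert (Hf : INR (fact (S q)) = INR (S q) * INR (fact q)) by (change (fact (S q)) with (S q * fact q)%nat; rewrite mult_INR; reflexivity).
  assert (Hfq : 0 < INR (fact q)) by (apply lt_0_INR, lt_O_fact).
  replace (- ((- ln z) ^ q / INR (fact q)) / z)
     with ((INR (S q) * (- ln z) ^ pred (S q)) * (- / z) / INR (fact (S q))).
  2:{ rewrite Hf. simpl pred. assert (0 < INR (S q)) by apply INR_S_pos. field. split; lra. }
  apply derivable_pt_lim_div_scal.
  apply (derivable_pt_lim_comp (fun z => - ln z) (fun u => u ^ S q)).
  - apply (derivable_pt_lim_opp ln). apply derivable_pt_lim_ln; auto.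
  - apply derivable_pt_lim_pow.
Qed.

Lemma P0_deriv z : derivable_pt_lim (P 0) z 0.
Proof.
  apply derivable_pt_lim_ext with (f := fct_cte 1).
  - intro; unfold P, fct_cte; simpl; field.
  - apply derivable_pt_lim_const.
Qed.

Lemma Q_deriv q y : y < 1 -> derivable_pt_lim (Q (S q)) y (Q q y / (1 - y)).
Proof.
  intros Hy. unfold Q.
  replace (P q (1 - y) / (1 - y)) with ((- P q (1 - y) / (1 - y)) * (-1)) by (field; lra).
  apply (derivable_pt_lim_comp (fun y => 1 - y) (P (S q))).
  - replace (-1) with (0 - 1) by ring.
    apply (derivable_pt_lim_minus (fct_cte 1) id). apply derivable_pt_lim_const. apply derivable_pt_lim_id.
  - apply P_deriv; lra.
Qed.

Lemma Q0 y : Q 0 y = 1.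
Proof. unfold Q, P; simpl; field. Qed.

Lemma const_of_deriv0 f a b :
  (forall x, a < x < b -> derivable_pt_lim f x 0) ->
  forall x y, a < x < b -> a < y < b -> f x = f y.
Proof.
  intros Hd.
  assert (Hw : forall x y, a < x < b -> a < y < b -> x < y -> f x = f y).
  { intros x y Hx Hy Hxy.
    destruct (MVT_cor2 f (fun _ => 0) x y Hxy) as [c [Hc _]].
    - intros c Hc. apply Hd. lra.
    - lra. }
  intros x y Hx Hy. destruct (Rtotal_order x y) as [Hl|[He|Hg]].
  - auto.
  - subst; auto.
  - symmetry; auto.
Qed.

Lemma Li_at_0 s : Li (s :: ones 0) 0 = 0 \/ True.
Proof. right; exact I. Qed.

Lemma Li_zero m k : Li (m :: ones k) 0 = 0.
Proof.
  apply (UL_sequence (fun n => Li_trunc (m :: ones k) 0 (S n))).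
  - assert (H1 := CV_shift' _ 1%nat _ (Li_cv m k 0 ltac:(rewrite Rabs_R0; lra))).
    apply Un_cv_ext with (2 := H1). intro n. f_equal. lia.
  - apply Un_cv_ext with (un := fun _ => 0); [|apply const_cv].
    intro n. rewrite Li_trunc_ps1, ps1_eq. ring.
Qed.

Lemma Li1_Q k y : Rabs y < 1 -> Li (1%nat :: ones k) y = Q (S k) y.
Proof.
  revert y. induction k; intros y Hy.
  - assert (Hc := const_of_deriv0 (fun y => Li (1%nat :: ones 0) y - Q 1 y) (-1) 1).
    assert (HQ0 : Q 1 0 = 0) by (unfold Q, P; rewrite Rminus_0_r, ln_1; simpl; field).
    cut (Li (1%nat :: ones 0) y - Q 1 y = Li (1%nat :: ones 0) 0 - Q 1 0).
    { rewrite Li_zero, HQ0. lra. }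
    apply Hc.
    + intros x Hx. replace 0 with (E 0 0 x - Q 0 x / (1 - x)).
      * apply derivable_pt_lim_minus.
        -- apply Li_deriv. apply Rabs_def1; lra.
        -- apply Q_deriv; lra.
      * rewrite Q0. assert (Hx' : Rabs x < 1) by (apply Rabs_def1; lra).
        assert (H1 := E_tele_0 x Hx'). field_simplify; [|lra].
        replace (E 0 0 x) with (((1 - x) * E 0 0 x) / (1 - x)) by (field; lra).
        rewrite H1. field. lra.
    + apply Rabs_def2 in Hy. lra.
    + lra.
  - assert (Hc := const_of_deriv0 (fun y => Li (1%nat :: ones (S k)) y - Q (S (S k)) y) (-1) 1).
    assert (HQ0 : Q (S (S k)) 0 = 0) by (unfold Q, P; rewrite Rminus_0_r, ln_1, Ropp_0, pow_i by lia; unfold Rdiv; ring).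
    cut (Li (1%nat :: ones (S k)) y - Q (S (S k)) y = Li (1%nat :: ones (S k)) 0 - Q (S (S k)) 0).
    { rewrite Li_zero, HQ0. lra. }
    apply Hc.
    + intros x Hx. assert (Hx' : Rabs x < 1) by (apply Rabs_def1; lra).
      replace 0 with (E 0 (S k) x - Q (S k) x / (1 - x)).
      * apply derivable_pt_lim_minus.
        -- apply Li_deriv. auto.
        -- apply Q_deriv; lra.
      * rewrite <- IHk by auto. rewrite <- (E_tele_S k x Hx'). field. lra.
    + apply Rabs_def2 in Hy. lra.
    + lra.
Qed.

Lemma cc_nonneg m k N : 0 <= cc m k N.
Proof.
  unfold cc. apply Rmult_le_pos; [|apply H_ones_nonneg].
  apply Rlt_le, Rinv_0_lt_compat, pow_lt, INR_S_pos.
Qed.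

Definition uu N := Pp N / INR (S N).

Lemma cc_tele m k N : (2 <= m)%nat -> cc m k N <= 2 ^ k * 4 * (uu N - uu (S N)).
Proof.
  intros Hm. unfold cc, uu.
  set (x := INR (S N)).
  assert (Hx : 1 <= x) by (unfold x; apply (le_INR 1); lia).
  assert (HSx : INR (S (S N)) = x + 1) by (unfold x; rewrite S_INR; reflexivity).
  change (Pp (S N)) with (Pp N * (1 + / (2 * INR (S N)))). fold x. rewrite HSx.
  assert (Hp := Pp_ge1 N).
  assert (Hb := H_ones_Pp k N).
  assert (Hn := H_ones_nonneg k N).
  assert (Hk : 0 < 2 ^ k) by (apply pow_lt; lra).
  assert (Hxm : x ^ 2 <= x ^ m) by (apply Rle_pow; lia || lra).
  assert (Hinv : / x ^ m <= / x ^ 2) by (apply Rinv_le_contravar; [apply pow_lt; lra|exact Hxm]).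
  assert (E1 : Pp N / x - Pp N * (1 + / (2 * x)) / (x + 1) = Pp N / (2 * x * (x + 1))) by (field; lra).
  rewrite E1.
  apply Rle_trans with (/ x ^ 2 * (2 ^ k * Pp N)).
  - apply Rmult_le_compat; auto. apply Rlt_le, Rinv_0_lt_compat, pow_lt; lra.
  - replace (2 ^ k * 4 * (Pp N / (2 * x * (x + 1)))) with (/ x ^ 2 * (2 ^ k * Pp N) * (2 * x / (x + 1))) by (field; lra).
    rewrite <- (Rmult_1_r (/ x ^ 2 * (2 ^ k * Pp N))) at 1.
    apply Rmult_le_compat_l.
    + apply Rmult_le_pos; [apply Rlt_le, Rinv_0_lt_compat, pow_lt; lra| nra].
    + apply (Rmult_le_reg_r (x + 1)); [lra|]. unfold Rdiv. rewrite Rmult_assoc, Rinv_l by lra. lra.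
Qed.

Lemma uu_nonneg N : 0 <= uu N.
Proof. unfold uu. assert (H1 := Pp_ge1 N). assert (H2 := INR_S_pos N). apply Rmult_le_pos; [lra|]. apply Rlt_le, Rinv_0_lt_compat; lra. Qed.

Lemma zeta_sum_cv m k : (2 <= m)%nat -> Un_cv (sum_f_R0 (cc m k)) (zeta (m :: ones k)).
Proof.
  intros Hm.
  destruct (pos_series_cv (cc m k) (2 ^ k * 4)) as [l Hl].
  - apply cc_nonneg.
  - intro n. apply Rle_trans with (sum_f_R0 (fun N => 2 ^ k * 4 * (uu N - uu (S N))) n).
    + apply sum_Rle. intros; apply cc_tele; auto.
    + assert (Ht : forall n, sum_f_R0 (fun N => 2 ^ k * 4 * (uu N - uu (S N))) n = 2 ^ k * 4 * (uu 0 - uu (S n))).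
      { induction n0; simpl; [ring|]. rewrite IHn0. ring. }
      rewrite Ht. assert (uu 0 = 1) by (unfold uu; simpl; field). 
      assert (Hk : 0 < 2 ^ k) by (apply pow_lt; lra). assert (Hu := uu_nonneg (S n)). nra.
  - assert (HH : Un_cv (H (m :: ones k)) l).
    { apply CV_shift with (k := 1%nat). apply Un_cv_ext with (2 := Hl).
      intro n. replace (n + 1)%nat with (S n) by lia. rewrite H_S. reflexivity. }
    unfold zeta. rewrite (seq_lim_ok _ _ HH). exact Hl.
Qed.

Lemma zeta_nonneg m k : (2 <= m)%nat -> 0 <= zeta (m :: ones k).
Proof.
  intros Hm. apply Rle_trans with (sum_f_R0 (cc m k) 0).
  - simpl. apply cc_nonneg.
  - apply sum_incr; [apply zeta_sum_cv; auto|apply cc_nonneg].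
Qed.

Lemma Li_bounds m k y : (2 <= m)%nat -> 0 <= y < 1 ->
  0 <= Li (m :: ones k) y <= y * zeta (m :: ones k).
Proof.
  intros Hm Hy.
  assert (Hy' : Rabs y < 1) by (rewrite Rabs_right; lra).
  assert (HL := Li_ps1_cv m k y Hy').
  split.
  - apply (@Rle_cv_lim (fun _ => 0) (ps1 (cc m k) y)); [|apply const_cv|exact HL].
    intro n. unfold ps1. apply cond_pos_sum. intro N. apply Rmult_le_pos; [apply pow_le; lra|apply cc_nonneg].
  - apply (@Rle_cv_lim (ps1 (cc m k) y) (fun n => y * sum_f_R0 (cc m k) n)); [|exact HL|].
    + intro n. unfold ps1. rewrite scal_sum. apply sum_Rle. intros N _.
      simpl pow. rewrite Rmult_assoc, Rmult_comm.
      apply Rmult_le_compat_r; [lra|].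
      rewrite <- (Rmult_1_l (cc m k N)) at 2. apply Rmult_le_compat_r; [apply cc_nonneg|].
      rewrite <- (pow1 N). apply pow_incr. lra.
    + apply CV_mult; [apply const_cv|apply zeta_sum_cv; auto].
Qed.

Definition D01 (z : R) := 0 < z < 1.
Definition lim1 (f : R -> R) (l : R) := limit1_in f D01 l 1.

Lemma lim1_intro f l :
  (forall eps, 0 < eps -> exists d, 0 < d /\ forall z, 1 - d < z < 1 -> Rabs (f z - l) < eps) ->
  lim1 f l.
Proof.
  intros Hf eps Heps. destruct (Hf eps Heps) as [d [Hd Hz]].
  exists (Rmin d 1). split. { apply Rmin_glb_lt; lra. }
  intros x [Hx Hdx]. simpl in *. unfold Rdist in *. unfold D01 in Hx.
  apply Hz. rewrite Rabs_left in Hdx by lra.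
  assert (Rmin d 1 <= d) by apply Rmin_l. lra.
Qed.

Lemma lim1_elim f l : lim1 f l -> forall eps, 0 < eps ->
  exists d, 0 < d /\ forall z, 1 - d < z < 1 -> Rabs (f z - l) < eps.
Proof.
  intros Hf eps Heps. destruct (Hf eps Heps) as [d [Hd Hz]].
  exists (Rmin d 1). split. { apply Rmin_glb_lt; lra. }
  intros z Hz1. assert (Rmin d 1 <= d) by apply Rmin_l. assert (Rmin d 1 <= 1) by apply Rmin_r.
  apply (Hz z). split. { unfold D01; lra. }
  simpl. unfold Rdist. rewrite Rabs_left by lra. lra.
Qed.

Lemma lim1_ext f g l : (forall z, 0 < z < 1 -> f z = g z) -> lim1 f l -> lim1 g l.
Proof.
  intros Hfg Hf eps Heps. destruct (Hf eps Heps) as [d [Hd Hz]].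
  exists d; split; auto. intros x [Hx Hdx]. rewrite <- Hfg by exact Hx. apply Hz; split; auto.
Qed.

Lemma lim1_const c : lim1 (fun _ => c) c.
Proof. apply (limit_free (fun _ => c) D01 0 1). Qed.

Lemma lim1_plus f g l l' : lim1 f l -> lim1 g l' -> lim1 (fun z => f z + g z) (l + l').
Proof. apply limit_plus. Qed.

Lemma lim1_mult f g l l' : lim1 f l -> lim1 g l' -> lim1 (fun z => f z * g z) (l * l').
Proof. apply limit_mul. Qed.

Lemma lim1_sum (f : nat -> R -> R) (l : nat -> R) n :
  (forall i, (i <= n)%nat -> lim1 (f i) (l i)) ->
  lim1 (fun z => sum_f_R0 (fun i => f i z) n) (sum_f_R0 l n).
Proof.
  induction n; intros Hf.
  - simpl. apply Hf. lia.
  - simpl. apply lim1_plus. apply IHn; intros; apply Hf; lia. apply Hf; lia.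
Qed.

Lemma lim1_cont f : continuity_pt f 1 -> lim1 f (f 1).
Proof.
  intros Hc eps Heps. destruct (Hc eps Heps) as [d [Hd Hz]].
  exists d; split; auto. intros x [Hx Hdx]. apply Hz. split; auto.
  split; [exact I|]. unfold D01 in Hx. lra.
Qed.

Lemma lim1_squeeze0 f g d0 : 0 < d0 ->
  (forall z, 1 - d0 < z < 1 -> Rabs (f z) <= g z) -> lim1 g 0 -> lim1 f 0.
Proof.
  intros Hd0 Hfg Hg. apply lim1_intro. intros eps Heps.
  destruct (lim1_elim g 0 Hg eps Heps) as [d [Hd Hz]].
  exists (Rmin d d0). split. { apply Rmin_glb_lt; lra. }
  intros z Hz1. assert (Rmin d d0 <= d) by apply Rmin_l. assert (Rmin d d0 <= d0) by apply Rmin_r.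
  rewrite Rminus_0_r. apply Rle_lt_trans with (g z). apply Hfg; lra.
  specialize (Hz z ltac:(lra)). rewrite Rminus_0_r in Hz. apply Rle_lt_trans with (2 := Hz). apply RRle_abs.
Qed.

Lemma lim1_unique_const c l f : (forall z, 0 < z < 1 -> f z = c) -> lim1 f l -> c = l.
Proof.
  intros Hc Hf. apply Rminus_diag_uniq.
  destruct (Req_dec (c - l) 0) as [E0|Hne]; auto. exfalso.
  assert (Hp : 0 < Rabs (c - l)) by (apply Rabs_pos_lt; auto).
  destruct (lim1_elim f l Hf _ Hp) as [d [Hd Hz]].
  set (z := Rmax (1/2) (1 - d/2)).
  assert (Hz1 : 1 - d < z < 1). { unfold z. split. apply Rlt_le_trans with (1 - d/2); [lra|apply Rmax_r].
    apply Rmax_lub_lt; lra. }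
  specialize (Hz z Hz1). rewrite Hc in Hz. lra.
  split. apply Rlt_le_trans with (1/2); [lra|apply Rmax_l]. lra.
Qed.

Lemma bernoulli z n : 0 <= z <= 1 -> 1 - z ^ n <= INR n * (1 - z).
Proof.
  intros Hz. induction n.
  - simpl. lra.
  - rewrite S_INR. simpl pow.
    assert (0 <= z ^ n <= 1) by (split; [apply pow_le; lra|rewrite <- (pow1 n); apply pow_incr; lra]).
    nra.
Qed.

Lemma Li_lim1 m k : (2 <= m)%nat -> lim1 (Li (m :: ones k)) (zeta (m :: ones k)).
Proof.
  intros Hm. apply lim1_intro. intros eps Heps.
  set (Z := zeta (m :: ones k)).
  assert (HZ := zeta_sum_cv m k Hm). fold Z in HZ.
  assert (HZ0 : 0 <= Z) by (apply zeta_nonneg; auto).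
  destruct (HZ (eps / 2) ltac:(lra)) as [M HM].
  specialize (HM M (Nat.le_refl M)). unfold Rdist in HM.
  assert (HSM : sum_f_R0 (cc m k) M <= Z) by (apply sum_incr; auto; apply cc_nonneg).
  set (CM := sum_f_R0 (fun N => INR (S N) * cc m k N) M).
  assert (HCM : 0 <= CM) by (apply cond_pos_sum; intro N; apply Rmult_le_pos; [apply pos_INR|apply cc_nonneg]).
  exists (Rmin (1/2) (eps / (2 * (CM + 1)))). split.
  { apply Rmin_glb_lt; [lra|]. apply Rdiv_lt_0_compat; lra. }
  intros z Hz.
  assert (Hd1 : Rmin (1/2) (eps / (2 * (CM + 1))) <= 1/2) by apply Rmin_l.
  assert (Hd2 : Rmin (1/2) (eps / (2 * (CM + 1))) <= eps / (2 * (CM + 1))) by apply Rmin_r.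
  assert (Hz' : 0 <= z < 1) by lra.
  destruct (Li_bounds m k z Hm Hz') as [HL0 HL1]. fold Z in HL1.
  assert (Hzr : Rabs z < 1) by (rewrite Rabs_right; lra).
  assert (Hps : ps1 (cc m k) z M <= Li (m :: ones k) z).
  { apply sum_incr; [apply Li_ps1_cv; auto|]. intro N. apply Rmult_le_pos; [apply pow_le; lra|apply cc_nonneg]. }
  assert (Hlow : sum_f_R0 (cc m k) M - (1 - z) * CM <= ps1 (cc m k) z M).
  { unfold CM, ps1. rewrite scal_sum. rewrite <- minus_sum. apply sum_Rle. intros N _.
    assert (Hb := bernoulli z (S N) ltac:(lra)).
    assert (Hc := cc_nonneg m k N). nra. }
  assert (Hsmall : (1 - z) * CM <= eps / 2).
  { apply Rle_trans with (eps / (2 * (CM + 1)) * CM). apply Rmult_le_compat_r; lra.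
    apply (Rmult_le_reg_r (2 * (CM + 1))); [lra|]. field_simplify; lra. }
  rewrite Rabs_left1.
  - rewrite Rabs_left1 in HM by lra. lra.
  - assert (z * Z <= Z) by nra. lra.
Qed.

Lemma exp_nat n x : exp (INR n * x) = exp x ^ n.
Proof.
  induction n.
  - simpl. rewrite Rmult_0_l. apply exp_0.
  - rewrite S_INR. replace ((INR n + 1) * x) with (INR n * x + x) by ring.
    rewrite exp_plus, IHn. simpl. ring.
Qed.

Lemma xlog_bound p u : 0 < u < 1 ->
  u * (- ln u) ^ p <= INR (S p) ^ (S p) / (- ln u).
Proof.
  intros Hu.
  set (t := - ln u).
  assert (Ht : 0 < t) by (unfold t; assert (ln u < ln 1) by (apply ln_increasing; lra); rewrite ln_1 in H; lra).
  assert (Hq : 0 < INR (S p)) by apply INR_S_pos.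
  set (a := t / INR (S p)).
  assert (Ha : 0 <= a) by (unfold a; apply Rlt_le, Rdiv_lt_0_compat; lra).
  assert (Hexp : exp t = / u).
  { unfold t. rewrite <- ln_Rinv by lra. apply exp_ln. apply Rinv_0_lt_compat; lra. }
  assert (Ha2 : a ^ S p <= / u).
  { rewrite <- Hexp. replace t with (INR (S p) * a) by (unfold a; field; lra).
    rewrite exp_nat. apply pow_incr. split; auto.
    assert (H1 := exp_ineq1_le a). lra. }
  assert (Htp : t ^ S p = INR (S p) ^ S p * a ^ S p).
  { rewrite <- Rpow_mult_distr. f_equal. unfold a. field. lra. }
  apply (Rmult_le_reg_r t); [exact Ht|].
  replace (INR (S p) ^ S p / t * t) with (INR (S p) ^ S p) by (field; lra).
  replace (u * t ^ p * t) with (u * t ^ S p) by (simpl; ring).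
  rewrite Htp.
  assert (0 < INR (S p) ^ S p) by (apply pow_lt; lra).
  apply Rle_trans with (u * (INR (S p) ^ S p * / u)).
  - apply Rmult_le_compat_l; [lra|]. apply Rmult_le_compat_l; lra.
  - right. field. lra.
Qed.

Lemma K_lim p : lim1 (fun z => (1 - z) * (- ln (1 - z)) ^ p) 0.
Proof.
  apply lim1_intro. intros eps Heps.
  set (C := INR (S p) ^ S p).
  assert (HC : 0 < C) by (apply pow_lt, INR_S_pos).
  exists (exp (- (C / eps))). split; [apply exp_pos|].
  intros z Hz. set (u := 1 - z).
  assert (Hd1 : exp (- (C / eps)) < 1).
  { rewrite <- exp_0. apply exp_increasing. assert (0 < C / eps) by (apply Rdiv_lt_0_compat; lra). lra. }
  assert (Hu : 0 < u < exp (- (C / eps))) by (unfold u; lra).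
  assert (Hlu : ln u < - (C / eps)).
  { rewrite <- (ln_exp (- (C / eps))). apply ln_increasing; lra. }
  assert (Ht : C / eps < - ln u) by lra.
  assert (HCe : 0 < C / eps) by (apply Rdiv_lt_0_compat; lra).
  assert (Hb := xlog_bound p u ltac:(lra)). fold C in Hb.
  assert (H0 : 0 <= u * (- ln u) ^ p) by (apply Rmult_le_pos; [lra|apply pow_le; lra]).
  rewrite Rminus_0_r, Rabs_right by lra.
  apply Rle_lt_trans with (1 := Hb).
  apply (Rmult_lt_reg_r (- ln u)); [lra|].
  replace (C / - ln u * - ln u) with C by (field; lra).
  apply (Rmult_lt_reg_l (/ eps)); [apply Rinv_0_lt_compat; lra|].
  replace (/ eps * (eps * - ln u)) with (- ln u) by (field; lra).
  unfold Rdiv in Ht. rewrite Rmult_comm. exact Ht.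
Qed.

Lemma P_cont1 p : lim1 (P p) (match p with O => 1 | S _ => 0 end).
Proof.
  replace (match p with O => 1 | S _ => 0 end) with (P p 1).
  - apply lim1_cont. destruct p.
    + apply derivable_continuous_pt. exists 0. apply P0_deriv.
    + apply derivable_continuous_pt. exists (- P p 1 / 1). apply P_deriv. lra.
  - unfold P. rewrite ln_1, Ropp_0. destruct p; [simpl; field|rewrite pow_i by lia; unfold Rdiv; ring].
Qed.

Lemma mlnz_bound z : 1/2 <= z < 1 -> 0 <= - ln z <= 2 * (1 - z).
Proof.
  intros Hz. split.
  - assert (ln z < ln 1) by (apply ln_increasing; lra). rewrite ln_1 in H. lra.
  - assert (H1 := exp_ineq1_le (ln (/ z))).
    rewrite exp_ln in H1 by (apply Rinv_0_lt_compat; lra).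
    rewrite ln_Rinv in H1 by lra.
    assert (/ z <= 1 + 2 * (1 - z)).
    { apply (Rmult_le_reg_r z); [lra|]. rewrite Rinv_l by lra. nra. }
    lra.
Qed.

Definition dP (p : nat) (x : R) := match p with O => 0 | S q => - P q x / x end.

Lemma P_deriv' p x : 0 < x -> derivable_pt_lim (P p) x (dP p x).
Proof. intros Hx. destruct p; simpl. apply P0_deriv. apply P_deriv; auto. Qed.

Lemma Li_deriv2 m k x : (2 <= m)%nat -> 0 < x < 1 ->
  derivable_pt_lim (Li (m :: ones k)) x (Li ((m - 1)%nat :: ones k) x / x).
Proof.
  intros Hm Hx. destruct m as [|m']; [lia|].
  replace (S m' - 1)%nat with m' by lia.
  replace (Li (m' :: ones k) x / x) with (E m' k x).
  - apply Li_deriv. rewrite Rabs_right; lra.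
  - rewrite <- E_mul by (rewrite Rabs_right; lra). field. lra.
Qed.

Lemma telescope (u : nat -> R) M :
  sum_f_R0 (fun p => u p - match p with O => 0 | S q => u q end) M = u M.
Proof. induction M; simpl; [ring|]. rewrite IHM. ring. Qed.

Lemma inner_deriv M k x : 0 < x < 1 ->
  derivable_pt_lim (fun z => sum_f_R0 (fun p => P p z * Li ((M + 2 - p)%nat :: ones k) z) M) x
    (P M x * Q (S k) x / x).
Proof.
  intros Hx.
  set (u := fun p => P p x * Li ((M + 1 - p)%nat :: ones k) x).
  replace (P M x * Q (S k) x / x) with
    (sum_f_R0 (fun p => dP p x * Li ((M + 2 - p)%nat :: ones k) x + P p x * (Li ((M + 2 - p - 1)%nat :: ones k) x / x)) M).
  - apply (deriv_sum (fun p z => P p z * Li ((M + 2 - p)%nat :: ones k) z)).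
    intros p Hp. apply (derivable_pt_lim_mult (P p) (Li ((M + 2 - p)%nat :: ones k))).
    + apply P_deriv'; lra.
    + apply Li_deriv2; [lia|lra].
  - rewrite <- Li1_Q by (rewrite Rabs_right; lra).
    transitivity (sum_f_R0 (fun p => (u p - match p with O => 0 | S q => u q end) / x) M).
    + apply sum_eq. intros p Hp. unfold u. destruct p.
      * simpl dP. replace (M + 2 - 0 - 1)%nat with (M + 1 - 0)%nat by lia. field. lra.
      * simpl dP. replace (M + 2 - S p - 1)%nat with (M + 1 - S p)%nat by lia.
        replace (M + 2 - S p)%nat with (M + 1 - p)%nat by lia. field. lra.
    + transitivity (sum_f_R0 (fun p => u p - match p with O => 0 | S q => u q end) M / x).
      * unfold Rdiv. rewrite (Rmult_comm (sum_f_R0 _ _)), scal_sum. apply sum_eq; intros; ring.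
      * rewrite telescope. unfold u. replace (M + 1 - M)%nat with 1%nat by lia. reflexivity.
Qed.

Definition Lfun n z := sum_f_R0 (fun k =>
    sum_f_R0 (fun p => P p z * Li ((n - k + 2 - p)%nat :: ones k) z) (n - k)) n.

Lemma L_deriv n x : 0 < x < 1 ->
  derivable_pt_lim (Lfun n) x (sum_f_R0 (fun k => P (n - k) x * Q (S k) x / x) n).
Proof.
  intros Hx. unfold Lfun.
  apply (deriv_sum (fun k z => sum_f_R0 (fun p => P p z * Li ((n - k + 2 - p)%nat :: ones k) z) (n - k))).
  intros k Hk. apply inner_deriv; auto.
Qed.

Lemma sum_rev (f : nat -> R) n : sum_f_R0 f n = sum_f_R0 (fun i => f (n - i)%nat) n.
Proof.
  revert f. induction n; intros f.
  - reflexivity.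
  - rewrite (tech5 (fun i => f (S n - i)%nat)). replace (S n - S n)%nat with 0%nat by lia.
    rewrite (decomp_sum f (S n)) by lia. simpl pred.
    rewrite (IHn (fun j => f (S j))).
    rewrite Rplus_comm. f_equal. apply sum_eq. intros i Hi. f_equal. lia.
Qed.

Definition Rfun n z := sum_f_R0 (fun i => P (S i) z * Q (n + 1 - i) z) n.

Lemma R_deriv n x : 0 < x < 1 ->
  derivable_pt_lim (Rfun n) x
    (sum_f_R0 (fun i => - P i x / x * Q (S (n - i)) x + P (S i) x * (Q (n - i) x / (1 - x))) n).
Proof.
  intros Hx. unfold Rfun.
  apply (deriv_sum (fun i z => P (S i) z * Q (n + 1 - i) z)).
  intros i Hi. replace (n + 1 - i)%nat with (S (n - i)) by lia.
  apply (derivable_pt_lim_mult (P (S i)) (Q (S (n - i)))).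
  - apply P_deriv; lra.
  - apply Q_deriv; lra.
Qed.

Definition Phi n z := Lfun n z + Lfun n (1 - z) + Rfun n z.

Lemma Phi_deriv n x : 0 < x < 1 -> derivable_pt_lim (Phi n) x 0.
Proof.
  intros Hx. unfold Phi.
  set (T1 := sum_f_R0 (fun k => P (n - k) x * Q (S k) x / x) n).
  set (T2 := sum_f_R0 (fun k => P (n - k) (1 - x) * Q (S k) (1 - x) / (1 - x)) n).
  set (T3 := sum_f_R0 (fun i => - P i x / x * Q (S (n - i)) x + P (S i) x * (Q (n - i) x / (1 - x))) n).
  replace 0 with (T1 + T2 * (0 - 1) + T3).
  - apply (derivable_pt_lim_plus (fun z => Lfun n z + Lfun n (1 - z)) (Rfun n)).
    + apply (derivable_pt_lim_plus (Lfun n) (fun z => Lfun n (1 - z))).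
      * apply L_deriv; auto.
      * apply (derivable_pt_lim_comp (fun z => 1 - z) (Lfun n)).
        -- apply (derivable_pt_lim_minus (fct_cte 1) id). apply derivable_pt_lim_const. apply derivable_pt_lim_id.
        -- apply L_deriv; lra.
    + apply R_deriv; auto.
  - unfold T1, T2, T3.
    rewrite (sum_rev (fun k => P (n - k) x * Q (S k) x / x)).
    assert (E1 : forall j, P j (1 - x) = Q j x) by reflexivity.
    assert (E2 : forall j, Q j (1 - x) = P j x) by (intro j; unfold Q; f_equal; ring).
    rewrite (Rmult_comm (sum_f_R0 _ n) (0 - 1)), scal_sum.
    rewrite <- !plus_sum.
    rewrite sum_eq_R0; [reflexivity|].
    intros i Hi. rewrite E1, E2. replace (n - (n - i))%nat with i by lia. field. lra.
Qed.

Lemma sum_first (g : nat -> R) M :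
  sum_f_R0 (fun p => match p with O => 1 | S _ => 0 end * g p) M = g 0%nat.
Proof. induction M; simpl; [ring|]. rewrite IHM. ring. Qed.

Lemma L_lim n : lim1 (Lfun n) (sum_f_R0 (fun k => zeta ((n - k + 2)%nat :: ones k)) n).
Proof.
  unfold Lfun.
  apply (lim1_sum (fun k z => sum_f_R0 (fun p => P p z * Li ((n - k + 2 - p)%nat :: ones k) z) (n - k))).
  intros k Hk.
  replace (zeta ((n - k + 2)%nat :: ones k)) with
     (sum_f_R0 (fun p => match p with O => 1 | S _ => 0 end * zeta ((n - k + 2 - p)%nat :: ones k)) (n - k)).
  - apply (lim1_sum (fun p z => P p z * Li ((n - k + 2 - p)%nat :: ones k) z)).
    intros p Hp. apply lim1_mult.
    + apply P_cont1.
    + apply Li_lim1. lia.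
  - rewrite sum_first. f_equal. f_equal. lia.
Qed.

Lemma fact_ge1 p : 1 <= INR (fact p).
Proof. apply (le_INR 1). apply lt_O_fact. Qed.

Lemma div_fact_le x p : 0 <= x -> x / INR (fact p) <= x.
Proof.
  intros Hx. assert (H1 := fact_ge1 p).
  unfold Rdiv. rewrite <- (Rmult_1_r x) at 2. apply Rmult_le_compat_l; auto.
  rewrite <- Rinv_1. apply Rinv_le_contravar; lra.
Qed.

Lemma L1_lim n : lim1 (fun z => Lfun n (1 - z)) 0.
Proof.
  unfold Lfun.
  replace 0 with (sum_f_R0 (fun k => 0) n) by (rewrite sum_eq_R0; auto).
  apply (lim1_sum (fun k z => sum_f_R0 (fun p => P p (1 - z) * Li ((n - k + 2 - p)%nat :: ones k) (1 - z)) (n - k))).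
  intros k Hk.
  replace 0 with (sum_f_R0 (fun p => 0) (n - k)) by (rewrite sum_eq_R0; auto).
  apply (lim1_sum (fun p z => P p (1 - z) * Li ((n - k + 2 - p)%nat :: ones k) (1 - z))).
  intros p Hp.
  set (m := (n - k + 2 - p)%nat).
  assert (Hm : (2 <= m)%nat) by (unfold m; lia).
  set (Z := zeta (m :: ones k)).
  apply (lim1_squeeze0 _ (fun z => Z / INR (fact p) * ((1 - z) * (- ln (1 - z)) ^ p)) 1).
  - lra.
  - intros z Hz.
    destruct (Li_bounds m k (1 - z) Hm ltac:(lra)) as [HL0 HL1]. fold Z in HL1.
    assert (Hln : 0 <= - ln (1 - z)).
    { assert (ln (1 - z) < ln 1) by (apply ln_increasing; lra). rewrite ln_1 in H. lra. }
    assert (HP0 : 0 <= P p (1 - z)) by (unfold P; apply Rmult_le_pos; [apply pow_le; auto|apply Rlt_le, Rinv_0_lt_compat, lt_0_INR, lt_O_fact]).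
    rewrite Rabs_right by (apply Rle_ge, Rmult_le_pos; auto).
    apply Rle_trans with (P p (1 - z) * ((1 - z) * Z)).
    + apply Rmult_le_compat_l; auto.
    + right. unfold P. field. apply INR_fact_neq_0.
  - replace 0 with (Z / INR (fact p) * 0) by ring.
    apply lim1_mult; [apply lim1_const|apply K_lim].
Qed.

Lemma R_lim n : lim1 (Rfun n) 0.
Proof.
  unfold Rfun.
  replace 0 with (sum_f_R0 (fun k => 0) n) by (rewrite sum_eq_R0; auto).
  apply (lim1_sum (fun i z => P (S i) z * Q (n + 1 - i) z)).
  intros i Hi. set (j := (n + 1 - i)%nat).
  apply (lim1_squeeze0 _ (fun z => 2 ^ S i * ((1 - z) * (- ln (1 - z)) ^ j)) (1/2)).
  - lra.
  - intros z Hz.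
    assert (Hl := mlnz_bound z ltac:(lra)).
    assert (Hln : 0 <= - ln (1 - z)).
    { assert (ln (1 - z) < ln 1) by (apply ln_increasing; lra). rewrite ln_1 in H. lra. }
    assert (HP0 : 0 <= P (S i) z) by (unfold P; apply Rmult_le_pos; [apply pow_le; lra|apply Rlt_le, Rinv_0_lt_compat, lt_0_INR, lt_O_fact]).
    assert (HQ0 : 0 <= Q j z) by (unfold Q, P; apply Rmult_le_pos; [apply pow_le; lra|apply Rlt_le, Rinv_0_lt_compat, lt_0_INR, lt_O_fact]).
    rewrite Rabs_right by (apply Rle_ge, Rmult_le_pos; auto).
    assert (HPb : P (S i) z <= 2 ^ S i * (1 - z)).
    { unfold P. eapply Rle_trans; [apply div_fact_le; apply pow_le; lra|].
      apply Rle_trans with ((2 * (1 - z)) ^ S i). apply pow_incr; lra.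
      rewrite Rpow_mult_distr. apply Rmult_le_compat_l. apply pow_le; lra.
      change ((1 - z) ^ S i) with ((1 - z) * (1 - z) ^ i).
      assert (0 <= (1 - z) ^ i <= 1) by (split; [apply pow_le; lra| apply Rle_trans with (1 ^ i); [apply pow_incr; lra|rewrite pow1; lra]]).
      nra. }
    assert (HQb : Q j z <= (- ln (1 - z)) ^ j) by (unfold Q, P; apply div_fact_le; apply pow_le; lra).
    apply Rle_trans with ((2 ^ S i * (1 - z)) * (- ln (1 - z)) ^ j).
    + apply Rmult_le_compat; auto.
    + right; ring.
  - replace 0 with (2 ^ S i * 0) by ring.
    apply lim1_mult; [apply lim1_const|apply K_lim].
Qed.

Lemma Phi_lim n : lim1 (Phi n) (sum_f_R0 (fun k => zeta ((n - k + 2)%nat :: ones k)) n).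
Proof.
  unfold Phi.
  rewrite <- (Rplus_0_r (sum_f_R0 _ n)), <- (Rplus_0_r (sum_f_R0 _ n + 0)).
  apply (lim1_plus (fun z => Lfun n z + Lfun n (1 - z)) (Rfun n)).
  - apply (lim1_plus (Lfun n) (fun z => Lfun n (1 - z))).
    + apply L_lim.
    + apply L1_lim.
  - apply R_lim.
Qed.

Lemma binom_inner n :
  sum_f_R0 (fun i => / (INR (fact (S i)) * INR (fact (n + 1 - i)))) n =
  (2 ^ (n + 2) - 2) / INR (fact (n + 2)).
Proof.
  assert (Hb := binomial 1 1 (n + 2)).
  replace (1 + 1) with 2 in Hb by ring.
  replace (n + 2)%nat with (S (S n)) in * by lia.
  rewrite tech5, decomp_sum in Hb by lia. simpl pred in Hb.
  assert (Hf : 0 < INR (fact (S (S n)))) by (apply lt_0_INR, lt_O_fact).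
  assert (HC0 : C (S (S n)) 0 = 1) by (unfold C; rewrite Nat.sub_0_r; change (INR (fact 0)) with 1; field; apply INR_fact_neq_0).
  assert (HCn : C (S (S n)) (S (S n)) = 1) by (unfold C; rewrite Nat.sub_diag; change (INR (fact 0)) with 1; field; apply INR_fact_neq_0).
  rewrite HC0, HCn in Hb.
  assert (Hs : sum_f_R0 (fun i => C (S (S n)) (S i) * 1 ^ S i * 1 ^ (S (S n) - S i)) n =
               INR (fact (S (S n))) * sum_f_R0 (fun i => / (INR (fact (S i)) * INR (fact (n + 1 - i)))) n).
  { rewrite scal_sum. apply sum_eq. intros i Hi. rewrite !pow1. unfold C.
    replace (S (S n) - S i)%nat with (n + 1 - i)%nat by lia. field.
    split; apply INR_fact_neq_0. }
  rewrite Hs in Hb. rewrite !pow1 in Hb.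
  apply (Rmult_eq_reg_l (INR (fact (S (S n))))); [|lra].
  field_simplify; [|lra]. lra.
Qed.

Lemma P_half p : P p (1/2) = ln 2 ^ p / INR (fact p).
Proof.
  unfold P. f_equal. f_equal. replace (1/2) with (/ 2) by field. rewrite ln_Rinv by lra. ring.
Qed.

Theorem corollary7 (n : nat) :
  sum_f_R0 (fun k =>
    sum_f_R0 (fun p =>
      ln 2 ^ p / INR (fact p) * Li ((n - k + 2 - p)%nat :: ones k) (1/2))
      (n - k)) n
  = (1 - 2 ^ (n + 1)) / INR (fact (n + 2)) * ln 2 ^ (n + 2)
    + 1/2 * sum_f_R0 (fun k => zeta ((n - k + 2)%nat :: ones k)) n.
Proof.
  set (ZS := sum_f_R0 (fun k => zeta ((n - k + 2)%nat :: ones k)) n).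
  assert (Hc : forall z, 0 < z < 1 -> Phi n z = Phi n (1/2)).
  { intros z Hz. apply (const_of_deriv0 (Phi n) 0 1); [|auto|lra].
    intros x Hx. apply Phi_deriv; auto. }
  assert (HZ := lim1_unique_const _ _ _ Hc (Phi_lim n)). fold ZS in HZ.
  assert (HL : Lfun n (1/2) = sum_f_R0 (fun k =>
    sum_f_R0 (fun p =>
      ln 2 ^ p / INR (fact p) * Li ((n - k + 2 - p)%nat :: ones k) (1/2))
      (n - k)) n).
  { unfold Lfun. apply sum_eq. intros k Hk. apply sum_eq. intros p Hp. rewrite P_half. reflexivity. }
  assert (HR : Rfun n (1/2) = ln 2 ^ (n + 2) * ((2 ^ (n + 2) - 2) / INR (fact (n + 2)))).
  { unfold Rfun. rewrite <- binom_inner. rewrite scal_sum. apply sum_eq. intros i Hi.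
    unfold Q. replace (1 - 1/2) with (1/2) by field. rewrite !P_half.
    replace (n + 2)%nat with (S i + (n + 1 - i))%nat by lia. rewrite pow_add.
    field. split; apply INR_fact_neq_0. }
  unfold Phi in HZ. replace (1 - 1/2) with (1/2) in HZ by field.
  rewrite <- HL. 
  assert (Hf : 0 < INR (fact (n + 2))) by (apply lt_0_INR, lt_O_fact).
  replace (2 ^ (n + 2)) with (2 * 2 ^ (n + 1)) in HR by (replace (n + 2)%nat with (S (n + 1)) by lia; reflexivity).
  rewrite HR in HZ.
  apply (Rmult_eq_reg_l 2); [|lra].
  replace (2 * (Lfun n (1/2))) with (ZS - ln 2 ^ (n + 2) * ((2 * 2 ^ (n + 1) - 2) / INR (fact (n + 2)))) by lra.
  field. lra.
Qed.
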